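(* Let $A=(a_{ij})_{i,j=1}^n$ be a real symmetric $n\times n$ matrix and $f(x)=x^\top A x$ for $x\in\mathbb{Z}^n$. Then $f$ is multimodular if and only if $$a_{ij}-a_{i,j+1}-a_{i+1,j}+a_{i+1,j+1}\le 0\qquad\text{for all } 0\le i<j\le n,$$ where by convention $a_{ij}=0$ whenever an index equals $0$ or $n+1$.
   Context: For $f:\mathbb{Z}^n\to\mathbb{R}\cup\{+\infty\}$, $\mathrm{dom}\, f=\{x\in\mathbb{Z}^n: f(x)<+\infty\}$. Let $e_i$ denote the $i$-th unit vector of $\mathbb{Z}^n$ and $\mathcal{F}=\{-e_1,\ e_1-e_2,\ e_2-e_3,\ \dots,\ e_{n-1}-e_n,\ e_n\}$. A function $f:\mathbb{Z}^n\to\mathbb{R}\cup\{+\infty\}$ is called multimodular if $\mathrm{dom}\, f\neq\emptyset$ and $f(z+d)+f(z+d')\ge f(z)+f(z+d+d')$ for all $z\in\mathrm{dom}\, f$ and all distinct $d,d'\in\mathcal{F}$ (with the usual conventions for $+\infty$). *)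

(* Defs.v *)
From HB Require Import structures.
From mathcomp Require Import all_boot all_order all_algebra.
Set Implicit Arguments. Unset Strict Implicit. Unset Printing Implicit Defensive.
Import Order.TTheory GRing.Theory Num.Theory.
Local Open Scope ring_scope.

(* Extended values R ∪ {+oo}: [Some r] is the finite value r, [None] is +oo. *)
Definition ext_add (R : realFieldType) (x y : option R) : option R :=
  match x, y with Some a, Some b => Some (a + b) | _, _ => None end.

Definition ext_ge (R : realFieldType) (x y : option R) : Prop :=
  match x, y with
  | None, _ => True
  | Some _, None => False
  | Some a, Some b => b <= a
  end.

(* Unit vector e_k, 1-based index k (1 <= k <= n). *)
Definition unitv (n k : nat) : 'cV[int]_n :=
  \col_(i < n) (if i.+1 == k then 1 else 0).

Definition inF (n : nat) (d : 'cV[int]_n) : Prop :=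
  d = - unitv n 1
  \/ (exists i : nat, (1 <= i)%N /\ (i < n)%N /\ d = unitv n i - unitv n i.+1)
  \/ d = unitv n n.

Definition dom (R : realFieldType) (n : nat) (f : 'cV[int]_n -> option R) :=
  fun x => f x <> None.

Definition multimodular (R : realFieldType) (n : nat)
    (f : 'cV[int]_n -> option R) : Prop :=
  (exists x, dom f x) /\
  forall (z d d' : 'cV[int]_n), dom f z -> inF d -> inF d' -> d <> d' ->
    ext_ge (ext_add (f (z + d)) (f (z + d'))) (ext_add (f z) (f (z + d + d'))).

Definition quadform (R : realFieldType) (n : nat) (A : 'M[R]_n)
    (x : 'cV[int]_n) : option R :=
  let xr := map_mx (fun z : int => z%:~R) x in
  Some ((xr^T *m A *m xr) ord0 ord0).

(* Entry a_{ij} with 1-based indices, and a_{ij} = 0 when an index is 0 or n+1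
   (more generally, outside 1..n). *)
Definition aext (R : realFieldType) (n : nat) (A : 'M[R]_n) (i j : nat) : R :=
  if [&& (1 <= i)%N & (1 <= j)%N] then
    match (insub i.-1 : option 'I_n), (insub j.-1 : option 'I_n) with
    | Some i', Some j' => A i' j'
    | _, _ => 0
    end
  else 0.

(* Main.v *)
Require Import Defs.
From HB Require Import structures.
From mathcomp Require Import all_boot all_order all_algebra.
From mathcomp Require Import lra zify.
Import Order.TTheory GRing.Theory Num.Theory.
Set Implicit Arguments. Unset Strict Implicit.
Local Open Scope ring_scope.

Section S.
Variables (R : realFieldType) (n : nat) (A : 'M[R]_n).
Definition bil (u v : 'cV[R]_n) : R := (u^T *m A *m v) 0 0.
Lemma bilDl u v w : bil (u + v) w = bil u w + bil v w.
Proof. by rewrite /bil linearD /= !mulmxDl mxE. Qed.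
Lemma bilDr u v w : bil w (u + v) = bil w u + bil w v.
Proof. by rewrite /bil !mulmxDr mxE. Qed.
Lemma bilBl u v w : bil (u - v) w = bil u w - bil v w.
Proof. rewrite /bil (raddfB (@trmx R n 1)) /=. rewrite !mulmxBl. by rewrite !mxE. Qed. 
Lemma bilBr u v w : bil w (u - v) = bil w u - bil w v.
Proof. by rewrite /bil !mulmxBr !mxE. Qed.
Lemma bilC (hA : A^T = A) u v : bil u v = bil v u.
Proof.
rewrite /bil; transitivity (((v^T *m A *m u)^T) 0 0); last by rewrite mxE.
by rewrite !trmx_mul trmxK hA mulmxA.
Qed.
Definition phi (x : 'cV[int]_n) : 'cV[R]_n := map_mx (fun z : int => z%:~R) x.
Lemma phiD x y : phi (x + y) = phi x + phi y.
Proof. by apply/matrixP => i j; rewrite !mxE intrD. Qed.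
Lemma phiB x y : phi (x - y) = phi x - phi y.
Proof. by apply/matrixP => i j; rewrite !mxE intrB. Qed.
Lemma quadE x : quadform A x = Some (bil (phi x) (phi x)).
Proof. by []. Qed.
Definition E k : 'cV[R]_n := \col_(i < n) (if i.+1 == k then 1 else 0).
Lemma phiE k : phi (unitv n k) = E k.
Proof. by apply/matrixP => i j; rewrite !mxE; case: ifP. Qed.
Lemma E_out k : (k == 0)%N || (n < k)%N -> E k = 0.
Proof.
move=> h; apply/matrixP => i j; rewrite !mxE; case: eqP => // e.
have := ltn_ord i; lia.
Qed.
Lemma unitv_out k : (k == 0)%N || (n < k)%N -> unitv n k = 0.
Proof.
move=> h; apply/matrixP => i j; rewrite !mxE; case: eqP => // e.
have := ltn_ord i; lia.
Qed.
Lemma E_in (i : 'I_n) : E i.+1 = delta_mx i 0.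
Proof.
apply/matrixP => k j; rewrite !mxE (ord1 j) andbT.
case: (eqVneq k i) => [->|ne]; first by rewrite eqxx.
have -> : (k.+1 == i.+1) = false by apply/negbTE; rewrite eqSS.
by [].
Qed.
Lemma aext_in (i j : 'I_n) : aext A i.+1 j.+1 = A i j.
Proof. by rewrite /aext /= !valK. Qed.
Lemma aext_out k l : (k == 0)%N || (n < k)%N || (l == 0)%N || (n < l)%N -> aext A k l = 0.
Proof.
rewrite /aext; case: k => [|k]; case: l => [|l] //= h.
case: insubP => [k' hk ek|hk] //=; case: insubP => [l' hl el|hl] //=.
move: h; rewrite /= in hk hl; lia.
Qed.
Lemma bilE k l : bil (E k) (E l) = aext A k l.
Proof.
have [hk|hk] := boolP ((k == 0)%N || (n < k)%N).
  rewrite E_out // aext_out; last by rewrite hk.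
  by rewrite /bil trmx0 !mul0mx mxE.
have [hl|hl] := boolP ((l == 0)%N || (n < l)%N).
  rewrite (@E_out l hl) aext_out; last by rewrite -orbA hl orbT.
  by rewrite /bil !mulmx0 mxE.
case: k hk => [|k] // hk; case: l hl => [|l] // hl.
have hk' : (k < n)%N by lia.
have hl' : (l < n)%N by lia.
have := E_in (Ordinal hk'); have := E_in (Ordinal hl'); have := aext_in (Ordinal hk') (Ordinal hl').
rewrite /= => -> -> ->.
by rewrite /bil trmx_delta -rowE -colE !mxE.
Qed.
Definition D k : 'cV[int]_n := unitv n k - unitv n k.+1.
Lemma inF_D d : inF d <-> exists k, (k <= n)%N /\ d = D k.
Proof.
split.
- case=> [->|[[i [h1 [h2 ->]]]|->]].
  + exists 0%N; split => //; rewrite /D (unitv_out (k:=0)) //; by rewrite sub0r.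
  + by exists i; split => //; apply: ltnW.
  + exists n; split => //; rewrite /D (unitv_out (k:=n.+1)) ?ltnSn ?orbT //.
    by rewrite subr0.
- case=> k [hk ->]; case: k hk => [|k] hk.
  + by left; rewrite /D (unitv_out (k:=0)) // sub0r.
  + rewrite leq_eqVlt in hk; case/orP: hk => [/eqP ek|hk].
    * right; right; rewrite /D.
      have -> : k.+2 = n.+1 by rewrite ek.
      rewrite (unitv_out (k:=n.+1)) ?subr0 ?ltnSn ?orbT //; by rewrite ek.
    * by right; left; exists k.+1; split => //; split.
Qed.
Lemma phiDk k : phi (D k) = E k - E k.+1.
Proof. by rewrite /D phiB !phiE. Qed.
Lemma bilDk i j : bil (phi (D i)) (phi (D j)) =
  aext A i j - aext A i j.+1 - aext A i.+1 j + aext A i.+1 j.+1.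
Proof. rewrite !phiDk !bilBl !bilBr !bilE; lra. Qed.
Lemma key (hA : A^T = A) z d d' :
  ext_ge (ext_add (quadform A (z + d)) (quadform A (z + d')))
    (ext_add (quadform A z) (quadform A (z + d + d'))) <->
  bil (phi d) (phi d') <= 0.
Proof.
rewrite !quadE /= !phiD !(bilDl, bilDr).
have s1 := bilC hA (phi z) (phi d).
have s2 := bilC hA (phi z) (phi d').
have s3 := bilC hA (phi d) (phi d').
split => h; lra.
Qed.
Lemma D_neq (hn : (0 < n)%N) i j : (i < j)%N -> (j <= n)%N -> D i <> D j.
Proof.
move=> lt le e; case: i lt e => [|i] lt e.
- have := congr1 (fun M : 'cV[int]_n => M (Ordinal hn) 0) e; rewrite !mxE /=.
  have -> : (1 == j.+1)%N = false by apply/eqP; lia.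
  by case: ifP.
- have hi : (i < n)%N by lia.
  have := congr1 (fun M : 'cV[int]_n => M (Ordinal hi) 0) e; rewrite !mxE /= eqxx.
  have -> : (i.+1 == j.+1)%N = false by apply/eqP; lia.
  have -> : (i.+1 == j)%N = false by apply/eqP; lia.
  have -> : (i.+1 == i.+2)%N = false by apply/eqP; lia.
  by [].
Qed.
End S.

Theorem proposition2p2 (R : realFieldType) (n : nat) (A : 'M[R]_n)
    (hn : (0 < n)%N) (hA : A^T = A) :
  multimodular (quadform A) <->
  (forall i j : nat, (i < j)%N -> (j <= n)%N ->
     aext A i j - aext A i j.+1 - aext A i.+1 j + aext A i.+1 j.+1 <= 0).
Proof.
split.
- move=> [_ H] i j lt le; rewrite -bilDk; apply/(key hA 0).
  apply: H.
  + by rewrite /dom quadE.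
  + by apply/inF_D; exists i; split => //; apply: ltnW; apply: leq_trans le.
  + by apply/inF_D; exists j.
  + exact: D_neq.
- move=> H; split; first by exists 0; rewrite /dom quadE.
  move=> z d d' _ /inF_D [i [hi ->]] /inF_D [j [hj ->]] ne; apply/key => //.
  case: (ltngtP i j) => [lt|gt|eq].
  + by rewrite bilDk; apply: H.
  + by rewrite bilC // bilDk; apply: H.
  + by subst.
Qed.
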